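(* Let $n \ge 2$ and let $S = s_1, s_2, \ldots, s_m$ be a sequence of messages, each drawn from a fixed set $M$ of $n$ possible messages, which a number of clients want to send to a server (each message of $S$ is held by some client). Suppose there is a dynamic instantaneous compression algorithm which, when applied to $S$, produces an encoding of $B$ bits. Then for every $k \ge 1$ there is a dynamic asymmetric communication protocol for sending $S$ to the server with which the server sends at most $O(n^{1/k}\log n)$ bits to each client (for each message that client sends), and the clients send, in total, at most $kB + 2|S|$ bits.
   Context: A code-tree over the alphabet $M$ is a binary tree in which left edges are labelled $0$, right edges are labelled $1$, and leaves are labelled with elements of $M$; the codeword of a leaf's label is the binary string on the path from the root to that leaf. A dynamic instantaneous (prefix-free) compression algorithm consists of an encoder and a decoder which each maintain a code-tree, initialized and updated by the same deterministic rule depending only on the characters processed so far: the encoder makes a single pass over the input string, and upon reading each character $a$ it writes the codeword of $a$ in its current code-tree and then updates the code-tree; the decoder reads the encoding codeword by codeword, outputs the corresponding character and updates its code-tree in the same way. The encoding of $S$ is the concatenation of the codewords written, and $B$ is its length in bits. In the communication setting, at any time the server knows all messages it has received so far, while each client knows only its own messages and does not observe communication between the server or other clients; the server has no knowledge of the distribution of the messages (this is what ''dynamic'' means for a protocol). The protocol must allow the server to recover every message of $S$. Logarithms are base 2; the $O(\cdot)$ is as $n \to \infty$. *)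

(* Defs.v *)
From mathcomp Require Import all_boot.
From Stdlib Require Import Reals.

Set Implicit Arguments.
Unset Strict Implicit.
Unset Printing Implicit Defensive.

(* A binary tree: [Node l r] has left edge labelled 0 (false) and right *)
(* edge labelled 1 (true); [CEmpty] marks an absent child (so nodes     *)
(* with fewer than two children are allowed); leaves carry labels in M. *)
Inductive ctree (M : Type) : Type :=
| CEmpty : ctree M
| CLeaf : M -> ctree M
| CNode : ctree M -> ctree M -> ctree M.
Arguments CEmpty {M}.

Fixpoint leaves (M : Type) (t : ctree M) : seq (M * bitseq) :=
  match t with
  | CEmpty => [::]
  | CLeaf a => [:: (a, [::])]
  | CNode l r => [seq (p.1, false :: p.2) | p <- leaves l]
                 ++ [seq (p.1, true :: p.2) | p <- leaves r]
  end.

Definition labels (M : Type) (t : ctree M) : seq M := [seq p.1 | p <- leaves t].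

(* the codeword of a (meaningful when a labels exactly one leaf) *)
Definition codeword (M : eqType) (t : ctree M) (a : M) : bitseq :=
  head [::] [seq p.2 | p <- leaves t & p.1 == a].

(* A dynamic instantaneous compression algorithm: the code-tree used   *)
(* after having processed the characters [h] is [A h].                 *)
Definition dyn_code (M : Type) := seq M -> ctree M.

Definition encodable (M : eqType) (A : dyn_code M) (S : seq M) : Prop :=
  forall i a, onth S i = Some a ->
    uniq (labels (A (take i S))) /\ a \in labels (A (take i S)).

Definition enc_length (M : eqType) (A : dyn_code M) (S : seq M) : nat :=
  sumn [seq size (codeword (A (take p.1 S)) p.2) | p <- zip (iota 0 (size S)) S].

(* Messages are sent one after the other; the i-th message S_i, held   *)
(* by client [owner i], is sent through a bit-by-bit interactive       *)
(* exchange between the server and that client.  Clients are named by  *)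
(* natural numbers.                                                    *)
(*  - server knowledge: the list of all previous (client, message,      *)
(*    transcript) triples, the identity of the current client, and the  *)
(*    current transcript;                                               *)
(*  - client knowledge: its identity, the list of ITS OWN previous      *)
(*    (message, transcript) pairs, its current message and the current  *)
(*    transcript (it sees nothing of other clients' exchanges);         *)
(*  - whose turn it is to send the next bit (or whether the exchange is *)
(*    over: None) is a function of knowledge common to both parties.   *)
(* The protocol is fixed in advance, independently of S (dynamic: the  *)
(* server knows nothing of the distribution of the messages).          *)
Record protocol (M : Type) := Protocol {
  turn : nat -> seq (M * bitseq) -> bitseq -> option bool; (* Some true: server speaks *)
  srv_bit : seq (nat * M * bitseq) -> nat -> bitseq -> bool;
  cli_bit : nat -> seq (M * bitseq) -> M -> bitseq -> bool;
  srv_out : seq (nat * M * bitseq) -> nat -> bitseq -> M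
}.

Definition valid_run (tu : bitseq -> option bool) (sb cb : bitseq -> bool)
    (t : bitseq) : Prop :=
  tu t = None /\
  forall j, j < size t -> exists p : bool,
    tu (take j t) = Some p /\
    nth false t j = (if p then sb (take j t) else cb (take j t)).

Definition server_bits (tu : bitseq -> option bool) (t : bitseq) : nat :=
  count (fun j => tu (take j t) == Some true) (iota 0 (size t)).
Definition client_bits (tu : bitseq -> option bool) (t : bitseq) : nat :=
  count (fun j => tu (take j t) == Some false) (iota 0 (size t)).

Section Run.
Variables (M : eqType) (P : protocol M) (S : seq M) (owner : nat -> nat)
          (ts : seq bitseq).

Definition srv_hist (i : nat) : seq (nat * M * bitseq) :=
  zip (zip (map owner (iota 0 i)) (take i S)) (take i ts).

Definition cli_hist (i : nat) : seq (M * bitseq) :=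
  [seq (x.1.2, x.2) | x <- srv_hist i & x.1.1 == owner i].

Definition turn_at (i : nat) : bitseq -> option bool :=
  turn P (owner i) (cli_hist i).

Definition transmits : Prop :=
  size ts = size S /\
  forall i a t, onth S i = Some a -> onth ts i = Some t ->
    valid_run (turn_at i) (srv_bit P (srv_hist i) (owner i))
              (cli_bit P (owner i) (cli_hist i) a) t
    /\ srv_out P (srv_hist i) (owner i) t = a.

Definition total_client_bits : nat :=
  sumn [seq client_bits (turn_at p.1) p.2 | p <- zip (iota 0 (size ts)) ts].
End Run.

Definition log2 (x : R) : R := (ln x / ln 2)%R.

(* Main.v *)
Require Import Defs.
From mathcomp Require Import all_boot.
From Stdlib Require Import Reals Lra.
From mathcomp Require Import zify.
Import ssrnat.

Set Implicit Arguments.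
Unset Strict Implicit.
Unset Printing Implicit Defensive.

Fixpoint nbits (c x : nat) : bitseq :=
  if c is c'.+1 then odd x :: nbits c' x./2 else [::].
Fixpoint bval (s : bitseq) : nat :=
  if s is b :: s' then b + 2 * bval s' else 0.

Lemma size_nbits c x : size (nbits c x) = c.
Proof. by elim: c x => //= c IH x; rewrite IH. Qed.

Lemma bvalK c x : x < 2 ^ c -> bval (nbits c x) = x.
Proof.
elim: c x => [|c IH] x /=; first by case: x.
move=> hx; rewrite IH; last by rewrite expnS in hx; lia.
by rewrite -{3}(odd_double_half x) -muln2 mulnC.
Qed.

Fixpoint words (D : nat) : seq bitseq :=
  if D is D'.+1 then [::] :: [seq b :: w | b <- [:: false; true], w <- words D']
  else [:: [::]].

Lemma words_mem D w : size w <= D -> w \in words D.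
Proof.
elim: D w => [|D IH] [|b w] //= hw.
rewrite inE; apply/orP; right.
by case: b; rewrite !mem_cat; apply/orP; [right|left]; rewrite ?mem_cat ?map_f ?IH.
Qed.

Lemma words_size D w : w \in words D -> size w <= D.
Proof.
elim: D w => [|D IH] w /=; first by rewrite mem_seq1 => /eqP ->.
rewrite inE => /orP [/eqP -> // |].
by rewrite !mem_cat => /or3P [] // /mapP [w' hw ->] /=; rewrite ltnS IH.
Qed.

Lemma size_words D : (size (words D)).+1 = 2 ^ D.+1.
Proof.
elim: D => [|D IH] //=; by rewrite !size_cat !size_map /= expnS -IH addn0 mulnS mul2n addnn add2n.
Qed.

Lemma chunk (X : Type) (f : X -> bitseq) L (ws : seq X) r i x0 :
  (forall x, size (f x) = L) -> i < size ws ->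
  take L (drop (i * L) (flatten (map f ws) ++ r)) = f (nth x0 ws i).
Proof.
move=> hf; elim: ws i => [|x ws IH] [|i] //= hi.
  by rewrite drop0 -catA take_size_cat.
rewrite mulSn addnC -drop_drop -catA drop_size_cat //; exact: IH.
Qed.

Lemma leaves_pf (M : eqType) (T : ctree M) x y p r :
  (x, p) \in leaves T -> (y, p ++ r) \in leaves T -> x = y /\ r = [::].
Proof.
elim: T x y p r => [|a|l IHl rt IHr] x y p r //=.
  by rewrite !mem_seq1 => /eqP [-> ->] /eqP [-> /eqP]; case: r.
rewrite !mem_cat => /orP [] /mapP [[x1 p1] h1 /= [-> ->]] /orP []
  /mapP [[x2 p2] h2 /= [-> ]] //= [e]; subst.
- exact: IHl h1 h2.
- exact: IHr h1 h2.
Qed.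

Lemma codeword_uniq (M : eqType) (l : seq (M * bitseq)) a w :
  uniq [seq p.1 | p <- l] -> (a, w) \in l ->
  head [::] [seq p.2 | p <- l & p.1 == a] = w.
Proof.
elim: l => [|[b v] l IH] //= /andP [hb hu].
rewrite inE => /orP [/eqP [-> ->]|hin]; first by rewrite eqxx.
case: eqP => [eab|_]; last exact: IH.
subst b; case/negP: hb; apply/mapP; by exists (a, w).
Qed.

Section Proto.
Variables (M : finType) (m0 : M) (c D : nat).
Hypothesis Hc : #|M| <= 2 ^ c.

Definition idx (m : M) := index m (enum M).

Definition enc_entry (o : option M) : bitseq :=
  if o is Some m then true :: nbits c (idx m) else false :: nseq c false.
Definition dec_entry (s : bitseq) : option M :=
  if s is b :: bs then (if b then onth (enum M) (bval bs) else None) else None.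

Lemma onth_idx m : onth (enum M) (bval (nbits c (idx m))) = Some m.
Proof.
have hi : idx m < #|M| by rewrite cardE /idx index_mem mem_enum.
rewrite bvalK; last exact: leq_trans hi Hc.
by rewrite onthE (nth_map m) ?nth_index ?mem_enum // -cardE.
Qed.

Lemma enc_entryK o : dec_entry (enc_entry o) = o.
Proof. by case: o => [m|] //=; rewrite onth_idx. Qed.

Lemma size_enc_entry o : size (enc_entry o) = c.+1.
Proof. by case: o => [m|] /=; rewrite ?size_nbits ?size_nseq. Qed.

Definition tabT (T : ctree M) (w : bitseq) : option M :=
  ohead [seq p.1 | p <- leaves T & p.2 == w].

Definition SM (T : ctree M) : bitseq :=
  flatten [seq enc_entry (tabT T w) | w <- words D].

Definition F := size (words D) * c.+1.

Lemma size_SM T : size (SM T) = F.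
Proof.
rewrite /SM /F; elim: (words D) => //= x ws IH.
by rewrite size_cat size_enc_entry IH mulSn.
Qed.

Definition tab_dec (s : bitseq) (w : bitseq) : option M :=
  dec_entry (take c.+1 (drop (index w (words D) * c.+1) s)).

Lemma tab_decE T s w : w \in words D -> tab_dec (SM T ++ s) w = tabT T w.
Proof.
move=> hw; rewrite /tab_dec /SM.
rewrite (@chunk _ (fun w => enc_entry (tabT T w)) c.+1 (words D) s (index w (words D)) w) ?index_mem //.
  by rewrite nth_index // enc_entryK.
by move=> x; exact: size_enc_entry.
Qed.

Lemma tabT_some T w y : tabT T w = Some y -> (y, w) \in leaves T.
Proof.
rewrite /tabT; case E: [seq p <- leaves T | p.2 == w] => [|q rest] //= [<-].
have : q \in [seq p <- leaves T | p.2 == w] by rewrite E inE eqxx.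
by rewrite mem_filter => /andP [/eqP <-]; case: q {E}.
Qed.

Lemma tabT_codeword T a : uniq (labels T) -> a \in labels T ->
  (a, codeword T a) \in leaves T /\ tabT T (codeword T a) = Some a.
Proof.
move=> hu /mapP [[a' q] hq /= ea]; subst a'.
have ec : codeword T a = q by rewrite /codeword; exact: codeword_uniq.
rewrite ec; split => //.
rewrite /tabT; case E: [seq p <- leaves T | p.2 == q] => [|[y v] rest] /=.
  have : (a, q) \in [seq p <- leaves T | p.2 == q] by rewrite mem_filter eqxx hq.
  by rewrite E.
have : (y, v) \in [seq p <- leaves T | p.2 == q] by rewrite E inE eqxx.
rewrite mem_filter /= => /andP [/eqP ev hv]; subst v.
have hv' : (y, q ++ [::]) \in leaves T by rewrite cats0.
by have [-> _] := leaves_pf hq hv'.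
Qed.

Definition cstr (s : bitseq) (a : M) : bitseq :=
  match [seq w <- words D | tab_dec s w == Some a] with
  | w :: _ => true :: w
  | [::] => false :: nbits c (idx a)
  end.

Definition myturn (t : bitseq) : option bool :=
  if size t < F then Some true else
  match drop F t with
  | [::] => Some false
  | false :: bs => if size bs < c then Some false else None
  | true :: p => if (tab_dec (take F t) p != None) || (D <= size p) then None
                 else Some false
  end.

Lemma myturn_true t : myturn t = Some true -> size t < F.
Proof.
rewrite /myturn; case: ltnP => // _.
case: (drop F t) => [|[] p] //; case: ifP => //.
Qed.

Definition sbit (T : ctree M) (t : bitseq) := nth false (SM T) (size t).
Definition cbit (a : M) (t : bitseq) := nth false (cstr (take F t) a) (size t - F).
Definition sout (T : ctree M) (t : bitseq) : M :=
  match drop F t with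
  | true :: w => odflt m0 (tabT T w)
  | false :: bs => odflt m0 (onth (enum M) (bval bs))
  | [::] => m0
  end.
Definition trans (T : ctree M) (a : M) := SM T ++ cstr (SM T) a.

Lemma tab_decE0 T w : w \in words D -> tab_dec (SM T) w = tabT T w.
Proof. by move=> hw; rewrite -[SM T]cats0 tab_decE. Qed.

Lemma cstr_cases T a : uniq (labels T) -> a \in labels T ->
  (cstr (SM T) a = true :: codeword T a /\ size (codeword T a) <= D) \/
  (cstr (SM T) a = false :: nbits c (idx a) /\ D < size (codeword T a)).
Proof.
move=> hu ha; have [hl htab] := tabT_codeword hu ha.
rewrite /cstr; case E: [seq w <- words D | tab_dec (SM T) w == Some a] => [|w rest].
  right; split => //; rewrite ltnNge; apply/negP => hle.
  have : codeword T a \in [seq w <- words D | tab_dec (SM T) w == Some a].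
    by rewrite mem_filter tab_decE0 ?words_mem // htab eqxx.
  by rewrite E.
left.
have : w \in [seq w <- words D | tab_dec (SM T) w == Some a] by rewrite E inE eqxx.
rewrite mem_filter => /andP [/eqP hw hwD].
rewrite tab_decE0 // in hw.
have hwl := tabT_some hw.
have -> : codeword T a = w by rewrite /codeword; exact: codeword_uniq.
by rewrite words_size.
Qed.

Lemma run_ok T a k : 0 < k -> c <= k * D -> uniq (labels T) -> a \in labels T ->
  [/\ valid_run myturn (sbit T) (cbit a) (trans T a),
      sout T (trans T a) = a,
      client_bits myturn (trans T a) <= k * size (codeword T a) + 2 &
      server_bits myturn (trans T a) = F].
Proof.
move=> hk hkD hu ha.
have [hl htab] := tabT_codeword hu ha.
set w0 := codeword T a in hl htab *.
set cs := cstr (SM T) a.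
have hcs : (cs = true :: w0 /\ size w0 <= D) \/
           (cs = false :: nbits c (idx a) /\ D < size w0) by exact: cstr_cases.
have hS := size_SM T.
have hdrop : drop F (trans T a) = cs by rewrite /trans drop_size_cat.
have htake : take F (trans T a) = SM T by rewrite /trans take_size_cat.
have hsz : size (trans T a) = F + size cs by rewrite /trans size_cat hS.
have htakej : forall j, F <= j -> take j (trans T a) = SM T ++ take (j - F) cs.
  by move=> j hj; rewrite /trans take_cat hS ltnNge hj.
have hlow : forall j, j < F -> myturn (take j (trans T a)) = Some true.
  move=> j hj; rewrite /myturn size_takel ?hj // hsz; lia.
have hhigh : forall j, F <= j -> j < size (trans T a) ->
    myturn (take j (trans T a)) = Some false.
  move=> j hj hjs; rewrite htakej // /myturn size_cat hS ltnNge leq_addr /=.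
  rewrite drop_size_cat // take_size_cat //.
  have hj' : j - F < size cs by rewrite hsz in hjs; lia.
  case: (j - F) hj' => [|m] hm; first by rewrite take0.
  case: hcs => [][hcs' hw]; rewrite hcs' /= in hm *; last first.
    by move: hm; rewrite size_nbits ltnS => hm; rewrite size_take size_nbits hm hm.
  move: hm; rewrite ltnS => hm.
  rewrite size_takel ?(ltnW hm) //.
  have -> : (D <= m) = false by apply/negbTE; rewrite -ltnNge; exact: leq_trans hm hw.
  rewrite tab_decE0; last by rewrite words_mem // size_takel ?(ltnW hm) // (leq_trans (ltnW hm) hw).
  case E: (tabT T (take m w0)) => [y|] //.
  have hy := tabT_some E.
  have hl' : (a, take m w0 ++ drop m w0) \in leaves T by rewrite cat_take_drop.
  have [_ hd] := leaves_pf hy hl'.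
  by move: (f_equal size hd); rewrite size_drop /=; lia.
split.
- split.
    rewrite /myturn hsz ltnNge leq_addr /= hdrop htake.
    case: hcs => [][-> hw] /=; last by rewrite size_nbits ltnn.
    by rewrite tab_decE0 ?words_mem // htab.
  move=> j hj; case: (ltnP j F) => hjF.
    exists true; split; first exact: hlow.
    by rewrite /sbit size_takel ?(ltnW (leq_trans hjF _)) /trans ?nth_cat ?hS ?hjF // hsz leq_addr.
  exists false; split; first exact: hhigh.
  rewrite /cbit htakej // take_size_cat // size_cat hS size_take.
  have hj' : j - F < size cs by rewrite hsz in hj; lia.
  by rewrite hj' /trans nth_cat hS ltnNge hjF /= addKn.
- rewrite /sout hdrop; case: hcs => [][-> hw] /=; first by rewrite htab.
  by rewrite onth_idx.
- rewrite /client_bits hsz iotaD count_cat add0n.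
  rewrite (@eq_in_count _ _ pred0); last first.
    by move=> j; rewrite mem_iota add0n => /andP [_ hj]; rewrite hlow.
  rewrite count_pred0 add0n.
  apply: leq_trans (count_size _ _) _; rewrite size_iota.
  case: hcs => [][-> hw] /=; first by have := leq_pmull (size w0) hk; lia.
  rewrite size_nbits.
  have : k * D.+1 <= k * size w0 by apply: leq_mul.
  lia.
- rewrite /server_bits hsz iotaD count_cat add0n.
  rewrite (@eq_in_count _ _ predT); last first.
    by move=> j; rewrite mem_iota add0n => /andP [_ hj]; rewrite hlow.
  rewrite count_predT size_iota (@eq_in_count _ _ pred0) ?count_pred0 ?addn0 //.
  move=> j; rewrite mem_iota => /andP [hj1 hj2]; rewrite hhigh //; last by rewrite hsz.
Qed.
End Proto.
Lemma Rpow_root (x : R) (k : nat) : (0 < x)%R -> (0 < k)%N -> Rpower (x ^ k) (/ INR k) = x.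
Proof.
move=> hx hk.
have hk' : INR k <> 0%R by apply: not_0_INR; lia.
rewrite -Rpower_pow // Rpower_mult Rinv_r // Rpower_1 //.
Qed.

Lemma pow_INR' m e : INR (m ^ e) = (INR m ^ e)%R.
Proof. by elim: e => [|e IH] //=; rewrite expnS mult_INR IH. Qed.

Lemma le_div' (a b c : R) : (0 < c)%R -> (a * c <= b)%R -> (a <= b / c)%R.
Proof.
move=> hc h; apply: (Rmult_le_reg_r c) => //; rewrite /Rdiv Rmult_assoc Rinv_l; lra.
Qed.
Lemma lt_div' (a b c : R) : (0 < c)%R -> (a * c < b)%R -> (a < b / c)%R.
Proof.
move=> hc h; apply: (Rmult_lt_reg_r c) => //; rewrite /Rdiv Rmult_assoc Rinv_l; lra.
Qed.

Lemma real_bound k n c D : (1 <= k)%N -> (2 <= n)%N -> c = up_log 2 n ->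
  D = (c + k.-1) %/ k ->
  (INR (2 ^ D.+1 * c.+1) <= 12 * (Rpower (INR n) (/ INR k) * log2 (INR n)))%R.
Proof.
move=> hk hn hc hD.
have c1 : (0 < c)%N by rewrite hc up_log_gt0; lia.
have c2 : (2 ^ c.-1 < n)%N by rewrite hc; apply: up_log_gtn.
have c3 : (k * D <= c + k.-1)%N.
  rewrite hD; have := leq_divM (c + k.-1) k; lia.
have c4 : (2 ^ (k * D) <= n * 2 ^ k)%N.
  apply: leq_trans (leq_pexp2l (isT : (0 < 2)%N) c3) _.
  have -> : (c + k.-1 = c.-1 + k)%N by lia.
  by rewrite expnD leq_mul2r ltnW ?c2 ?orbT.
have hnR : (2 <= INR n)%R by apply: (le_INR 2); apply/leP.
set x := INR (2 ^ D).
have hx : (0 < x)%R by apply: lt_0_INR; apply/ltP; rewrite expn_gt0.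
have hxk : (x ^ k <= INR n * 2 ^ k)%R.
  rewrite /x -pow_INR' -expnM mulnC.
  have -> : (2 ^ k = INR (2 ^ k))%R by rewrite pow_INR'.
  by rewrite -mult_INR; apply: le_INR; apply/leP.
have hx2 : (x <= 2 * Rpower (INR n) (/ INR k))%R.
  rewrite -{1}(@Rpow_root x k hx hk).
  have -> : (2 = Rpower (2 ^ k) (/ INR k))%R by rewrite Rpow_root //; lra.
  rewrite Rmult_comm Rpower_mult_distr; try lra; last by apply: pow_lt; lra.
  apply: Rle_Rpower_l.
    by apply: Rlt_le; apply: Rinv_0_lt_compat; apply: lt_0_INR; apply/ltP.
  split; [exact: pow_lt | ].
  exact: hxk.
have ln2 : (0 < ln 2)%R by rewrite -ln_1; apply: ln_increasing; lra.
have hlog1 : (1 <= log2 (INR n))%R.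
  rewrite /log2; apply: le_div' => //; rewrite Rmult_1_l.
  case: (Rle_lt_or_eq_dec _ _ hnR) => [h|<-]; last lra.
  by apply: Rlt_le; apply: ln_increasing; lra.
have hc2 : (INR c.-1 < log2 (INR n))%R.
  rewrite /log2; apply: lt_div' => //.
  rewrite -ln_pow; last lra.
  apply: ln_increasing; first by apply: pow_lt; lra.
  have -> : (2 ^ c.-1 = INR (2 ^ c.-1))%R by rewrite pow_INR'.
  by apply: lt_INR; apply/ltP.
have hc3 : (INR c.+1 <= 3 * log2 (INR n))%R.
  have -> : c.+1 = (c.-1 + 2)%N by lia.
  rewrite plus_INR /=; lra.
rewrite mult_INR expnS mult_INR -/x.
have h0 : (0 <= INR c.+1)%R by apply: pos_INR.
have h1 : (0 <= Rpower (INR n) (/ INR k))%R by apply: Rlt_le; apply: exp_pos.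
have : (INR 2 * x * INR c.+1 <= INR 2 * (2 * Rpower (INR n) (/ INR k)) * (3 * log2 (INR n)))%R.
  apply: Rmult_le_compat; try lra.
  - apply: Rmult_le_pos; [apply: pos_INR| lra].
  - apply: Rmult_le_compat_l => //; apply: pos_INR.
simpl INR; nra.
Qed.

Definition msgs (M : Type) (h : seq (nat * M * bitseq)) : seq M := [seq x.1.2 | x <- h].

Lemma sumn_zip_le (X Y : Type) (x0 : X) (y0 : Y) (s : seq X) (t : seq Y) m
  (f : nat * X -> nat) (g : nat * Y -> nat) : size s = size t ->
  (forall i, i < size s -> f (m + i, nth x0 s i) <= g (m + i, nth y0 t i)) ->
  sumn [seq f p | p <- zip (iota m (size s)) s] <=
  sumn [seq g p | p <- zip (iota m (size t)) t].
Proof.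
elim: s t m => [|x s IH] [|y t] m //= [hst] h.
apply: leq_add; first by have := h 0 isT; rewrite addn0.
apply: IH => // i hi; have := h i.+1 hi; by rewrite addSnnS.
Qed.

Lemma sumn_affine (X : Type) (l : seq X) (h : X -> nat) k :
  sumn [seq k * h p + 2 | p <- l] = k * sumn [seq h p | p <- l] + 2 * size l.
Proof. elim: l => [|x l IH] /=; first by rewrite muln0. rewrite IH mulnDr mulnS; lia. Qed.

Theorem theorem1 (k : nat) (hk : 1 <= k) :
  exists (C : R) (N : nat), (0 < C)%R /\
  forall (n : nat) (M : finType) (A : dyn_code M),
    2 <= n -> N <= n -> #|M| = n ->
    exists P : protocol M,
      forall (S : seq M) (owner : nat -> nat),
        encodable A S ->
        exists ts : seq bitseq,
          transmits P S owner ts /\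
          (forall i t, onth ts i = Some t ->
             (INR (server_bits (turn_at P S owner ts i) t)
                <= C * (Rpower (INR n) (/ INR k) * log2 (INR n)))%R) /\
          total_client_bits P S owner ts <= k * enc_length A S + 2 * size S.
Proof.
exists 12%R, 0; split; first lra.
move=> n M A hn _ hM.
have : 0 < #|M| by rewrite hM; lia.
case/card_gt0P => m0 _.
set c := up_log 2 n.
set D := (c + k.-1) %/ k.
have Hc : #|M| <= 2 ^ c by rewrite hM; apply: up_logP.
have hkD : c <= k * D.
  rewrite /D; have := divn_eq (c + k.-1) k; have := ltn_pmod (c + k.-1) hk; lia.
have hF : (INR (F c D) <= 12 * (Rpower (INR n) (/ INR k) * log2 (INR n)))%R.
  apply: Rle_trans (real_bound hk hn (erefl c) (erefl D)).
  apply: le_INR; apply/leP; rewrite /F leq_mul2r -size_words leqnSn orbT //.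
exists (Protocol (fun _ _ t => myturn M c D t)
                 (fun h _ t => sbit c D (A (msgs h)) t)
                 (fun _ _ a t => cbit c D a t)
                 (fun h _ t => sout m0 c D (A (msgs h)) t)).
move=> S owner hS.
set ts := mkseq (fun i => trans c D (A (take i S)) (nth m0 S i)) (size S).
have hts : size ts = size S by rewrite size_mkseq.
have hmsgs : forall i, i < size S -> msgs (srv_hist S owner ts i) = take i S.
  move=> i hi; rewrite /msgs /srv_hist.
  have -> : [seq x.1.2 | x <- zip (zip [seq owner i | i <- iota 0 i] (take i S)) (take i ts)]
      = unzip2 (unzip1 (zip (zip [seq owner i | i <- iota 0 i] (take i S)) (take i ts))).
    by rewrite /unzip2 /unzip1 -map_comp.
  rewrite unzip1_zip; last by rewrite size_zip !size_take size_map size_iota hts hi minnn.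
  by rewrite unzip2_zip // size_map size_iota size_take hi.
have key : forall i, i < size S ->
  [/\ valid_run (myturn M c D) (sbit c D (A (take i S))) (cbit c D (nth m0 S i))
        (trans c D (A (take i S)) (nth m0 S i)),
      sout m0 c D (A (take i S)) (trans c D (A (take i S)) (nth m0 S i)) = nth m0 S i,
      client_bits (myturn M c D) (trans c D (A (take i S)) (nth m0 S i))
        <= k * size (codeword (A (take i S)) (nth m0 S i)) + 2 &
      server_bits (myturn M c D) (trans c D (A (take i S)) (nth m0 S i)) = F c D].
  move=> i hi.
  have hon : onth S i = Some (nth m0 S i) by rewrite onthE (nth_map m0).
  have [hu ha] := hS i _ hon.
  exact: run_ok.
have hts_i : forall i t, onth ts i = Some t ->
    i < size S /\ t = trans c D (A (take i S)) (nth m0 S i).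
  move=> i t ho.
  have hi : i < size ts by rewrite -onthTE ho.
  split; first by rewrite -hts.
  by rewrite -(@onth_nth _ [::] t ts i ho) nth_mkseq // -hts.
exists ts.
have hsz : size ts = size S := hts.
split; last split.
- rewrite /transmits; split; first exact: hsz.
  move=> i a t hoS hot.
  have [hi ->] := hts_i i t hot.
  have ea : nth m0 S i = a by apply: (@onth_nth _ m0 a S i hoS).
  rewrite /turn_at /= hmsgs //.
  by have [h1 h2 _ _] := key i hi; rewrite -ea; split.
- move=> i t hot.
  have [hi ->] := hts_i i t hot.
  rewrite /turn_at /=.
  have [_ _ _ ->] := key i hi; exact: hF.
- rewrite /total_client_bits /enc_length.
  have E := sumn_affine (zip (iota 0 (size S)) S)
    (fun p => size (codeword (A (take p.1 S)) p.2)) k.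
  rewrite size_zip size_iota minnn in E.
  apply: (leq_trans _ (eq_leq E)).
  apply: (@sumn_zip_le _ _ [::] m0) => // i hi; rewrite hts in hi.
  rewrite /= /turn_at /= add0n nth_mkseq //.
  by have [_ _ -> _] := key i hi.
Qed.
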